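(* Let $G'(L'\cup R',E')$ be a bipartite graph with $|L'|=|R'|=N$ in which every vertex has degree at least $2N/3$. Then for any edge $e\in E'$, the probability that $e$ belongs to a perfect matching of $G'$ chosen uniformly at random is at most $3/N$. *)

(* Defs.v *)
From HB Require Import structures.
From mathcomp Require Import all_boot all_order all_algebra all_fingroup.
Set Implicit Arguments. Unset Strict Implicit. Unset Printing Implicit Defensive.
Import GRing.Theory Num.Theory.

(* A bipartite graph G'(L' ∪ R', E') with |L'| = |R'| = N is encoded by
   labelling both sides by 'I_N; adj i j (i in L', j in R') means the edge
   {i, j} is in E'. *)

Definition ldeg N (adj : 'I_N -> 'I_N -> bool) (i : 'I_N) : nat :=
  #|[set j | adj i j]|.
Definition rdeg N (adj : 'I_N -> 'I_N -> bool) (j : 'I_N) : nat :=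
  #|[set i | adj i j]|.

Definition perfect_matching N (adj : 'I_N -> 'I_N -> bool) (s : 'S_N) : bool :=
  [forall i, adj i (s i)].

Definition perfect_matchings N (adj : 'I_N -> 'I_N -> bool) : {set 'S_N} :=
  [set s | perfect_matching adj s].

Definition pm_edge_prob N (adj : 'I_N -> 'I_N -> bool) (i j : 'I_N) : rat :=
  (#|[set s in perfect_matchings adj | s i == j]|%:R
     / #|perfect_matchings adj|%:R)%R.

(* Main.v *)
Require Import Defs.
From HB Require Import structures.
From mathcomp Require Import all_boot all_order all_algebra all_fingroup.
From mathcomp Require Import zify.
Import GRing.Theory Num.Theory.
Local Open Scope ring_scope.

Lemma deg_nat (N x : nat) : (2 * N%:R / 3 <= x%:R :> rat)%R -> (2 * N <= 3 * x)%N.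
Proof.
by rewrite ler_pdivrMr ?ltr0n // -natrM -[3%R]/(3%:R) -natrM ler_nat [(3 * x)%N]mulnC.
Qed.

Theorem mainTheorem13 (N : nat) (adj : 'I_N -> 'I_N -> bool)
  (hL : forall i : 'I_N, (2 * N%:R / 3 <= (ldeg adj i)%:R :> rat)%R)
  (hR : forall j : 'I_N, (2 * N%:R / 3 <= (rdeg adj j)%:R :> rat)%R)
  (i j : 'I_N) (he : adj i j) :
  (pm_edge_prob adj i j <= 3 / N%:R)%R.
Proof.
set P := perfect_matchings adj.
set Pe := [set s in P | s i == j].
pose C (s : 'S_N) := [set k | adj i (s k) && adj k j].
have key : forall s : 'S_N, (N <= 3 * #|C s|)%N.
  move=> s.
  have hA : #|[set k | adj i (s k)]| = ldeg adj i.
    rewrite /ldeg -(card_preimset [set j0 | adj i j0] (@perm_inj _ s)).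
    by apply: eq_card => k; rewrite !inE.
  have eC : C s = [set k | adj i (s k)] :&: [set k | adj k j].
    by apply/setP => k; rewrite !inE.
  have hU := cardsU [set k | adj i (s k)] [set k | adj k j].
  have hm : (#|[set k | adj i (s k)] :|: [set k | adj k j]| <= N)%N.
    by rewrite -[X in (_ <= X)%N]card_ord max_card.
  have hl := deg_nat _ _ (hL i); have hr := deg_nat _ _ (hR j).
  rewrite hA in hU.
  have hI : (#|[set k | adj i (s k)] :&: [set k | adj k j]| <= ldeg adj i)%N.
    by rewrite -hA subset_leq_card // subsetIl.
  have hB : #|[set k | adj k j]| = rdeg adj j by [].
  rewrite hB in hU; rewrite eC; move: hl hr hU hI hm.
  move: (#|_ :&: _|) (#|_ :|: _|) (ldeg adj i) (rdeg adj j) => a b c d; lia.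
pose D := [set p : 'S_N * 'I_N | (p.1 \in Pe) && (p.2 \in C p.1)].
pose f (p : 'S_N * 'I_N) := (tperm i p.2 * p.1)%g.
have fD : forall p, p \in D -> f p \in P.
  case=> s k; rewrite /D /C !inE /= => /andP [/andP [sP /eqP sij]] /andP [h1 h2].
  apply/forallP => x; rewrite /f /= permM.
  move/forallP: sP => sP.
  case: (tpermP i k x) => [->|->|_ _]; first exact: h1.
    by rewrite sij.
  exact: sP.
have finj : {in D &, injective f}.
  case=> s k; case=> s' k'; rewrite /D /C !inE /= => /andP [/andP [_ /eqP sij] _].
  move=> /andP [/andP [_ /eqP sij'] _] eq.
  have ek : k = k'.
    have e1 : f (s, k) k = j by rewrite /f permM /= tpermR.
    have e2 : f (s', k') k' = j by rewrite /f permM /= tpermR.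
    by apply: (@perm_inj _ (f (s', k'))); rewrite e2 -eq e1.
  subst k'; congr (_, _).
  by move: eq; rewrite /f /= => /mulgI.
have hDP : (#|D| <= #|P|)%N.
  rewrite -(card_in_imset finj); apply: subset_leq_card.
  by apply/subsetP => _ /imsetP [p pD ->]; apply: fD.
have hsum : #|D| = (\sum_(s in Pe) #|C s|)%N.
  rewrite -sum1_card (eq_bigr (fun s => \sum_(k in C s) 1)%N); last first.
    by move=> s _; rewrite sum1_card.
  by rewrite pair_big_dep; apply: eq_bigl => p; rewrite /D inE.
have hmain : (#|Pe| * N <= 3 * #|P|)%N.
  apply: leq_trans (leq_mul (leqnn 3) hDP).
  rewrite hsum big_distrr /= -sum1_card big_distrl /=.
  by apply: leq_sum => s _; rewrite mul1n.
rewrite /pm_edge_prob -/P -/Pe.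
have [P0|Ppos] := posnP #|P|.
  by rewrite P0 invr0 mulr0 divr_ge0.
have Npos : (0 < N)%N := leq_ltn_trans (leq0n i) (ltn_ord i).
rewrite ler_pdivrMr ?ltr0n // mulrAC ler_pdivlMr ?ltr0n //.
by rewrite -natrM -[3%R]/(3%:R) -natrM ler_nat.
Qed.
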